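(* Let $m,a,b,t\in\mathbb{N}$ with $m\geq 3$, $a\geq 1$, $t\in\{2,\ldots,m-1\}$ and $(t-1)(am+1)<bm+t<t(am+1)$, and let $S=\langle m,\ am+1,\ bm+t\rangle$ (a MANS-semigroup with embedding dimension $3$). Then \[ \mathrm{F}(S)=r(am+1)+q(bm+t)-m, \] where $q=\left\lfloor\frac{m-1}{t}\right\rfloor$ and $r=(m-1)\bmod t$.
   Context: $\mathbb{N}=\{0,1,2,\ldots\}$. $\langle A\rangle$ is the submonoid of $(\mathbb{N},+)$ generated by $A$; a numerical semigroup is a submonoid of $\mathbb{N}$ with finite complement. $\mathrm{F}(S)$, the Frobenius number, is the greatest integer not in $S$. A MANS-semigroup is a numerical semigroup with $w(1)<\cdots<w(\mathrm{m}(S)-1)$, where $\mathrm{m}(S)$ is the least element of $S\setminus\{0\}$ and $w(i)$ the least element of $S$ congruent to $i$ modulo $\mathrm{m}(S)$. $a\bmod b$ is the remainder of the division of $a$ by $b$. *)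

(* Defs.v *)
From mathcomp Require Import all_boot.
Set Implicit Arguments. Unset Strict Implicit. Unset Printing Implicit Defensive.

Inductive gen_monoid (A : nat -> Prop) : nat -> Prop :=
  | gen_monoid0 : gen_monoid A 0
  | gen_monoid_add a x : A a -> gen_monoid A x -> gen_monoid A (a + x).

Definition is_frobenius (S : nat -> Prop) (f : nat) : Prop :=
  ~ S f /\ (forall x : nat, f < x -> S x).

Definition S3 (m a b t : nat) : nat -> Prop :=
  gen_monoid (fun x => x = m \/ x = a * m + 1 \/ x = b * m + t).

(* Main.v *)
Require Import Defs.
From mathcomp Require Import all_boot.
From mathcomp Require Import zify.

Lemma S3_mul m a b t g k x : (g = m \/ g = a * m + 1 \/ g = b * m + t) ->
  S3 m a b t x -> S3 m a b t (k * g + x).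
Proof.
move=> Hg Hx; elim: k => [|k IH]; first by rewrite mul0n.
by rewrite mulSn -addnA; apply: gen_monoid_add.
Qed.

Lemma S3_form m a b t x : S3 m a b t x ->
  exists u y z, x = u * m + y * (a * m + 1) + z * (b * m + t).
Proof.
elim=> [|g x0 Hg _ [u [y [z ->]]]]; first by exists 0, 0, 0.
case: Hg => [->|[->|->]].
- by exists u.+1, y, z; rewrite mulSn; lia.
- by exists u, y.+1, z; rewrite mulSn; lia.
- by exists u, y, z.+1; rewrite mulSn; lia.
Qed.

Lemma mono a b t i j : 0 < t -> (t - 1) * a <= b -> i <= j ->
  a * (i %% t) + b * (i %/ t) <= a * (j %% t) + b * (j %/ t).
Proof.
move=> t0 hb ij.
have hq : i %/ t <= j %/ t by apply: leq_div2r.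
have ri : i %% t < t by rewrite ltn_pmod.
have rj : j %% t < t by rewrite ltn_pmod.
have ei := divn_eq i t; have ej := divn_eq j t.
case: (ltnP (i %/ t) (j %/ t)) => h.
- have h1 : a * (i %% t) <= a * (t - 1) by apply: leq_mul => //; lia.
  have h2 : b * (i %/ t).+1 <= b * (j %/ t) by apply: leq_mul.
  rewrite mulnS in h2. rewrite mulnC in h1. lia.
- have e : i %/ t = j %/ t by lia.
  rewrite e leq_add2r leq_mul2l; apply/orP; right.
  rewrite e in ei. lia.
Qed.

Lemma L1 m a b t r q y z j : r + q * t + 1 = m -> r < t -> (t - 1) * a <= b ->
  b < t * a -> 3 <= m -> 2 <= t -> y + z * t + 1 = m * j -> 1 <= j ->
  a * r + b * q < a * y + b * z + j.
Proof.
move=> hm rt hb1 hb2 m3 t2 hs j1.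
case: (ltnP 1 j) => hj.
- have f1 : b * y <= t * a * y by apply: leq_mul => //; lia.
  have f2 : t * a * r <= (b + a) * r by apply: leq_mul => //; lia.
  have f3 : a * r <= a * (t - 1) by apply: leq_mul => //; lia.
  have f4 : b * (m * 2) <= b * (m * j) by apply: leq_mul => //; apply: leq_mul.
  suff : t * (a * r + b * q) < t * (a * y + b * z + j) by rewrite ltn_pmul2l //; lia.
  have g1 : t * (a * r + b * q) <= b * m.
    rewrite -hm. rewrite mulnDl in f2. 
    have : a * (t - 1) + a = a * t by rewrite -mulnSr; congr (_ * _); lia.
    timeout 20 lia.
  have g2 : b * (m * j) + t * j <= t * (a * y + b * z + j) + b.
    rewrite -hs. timeout 20 lia.
  timeout 20 lia.
- have ej : j = 1 by lia.
  rewrite ej muln1 in hs.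
  have zq : z <= q.
    rewrite leqNgt; apply/negP => c.
    have : q.+1 * t <= z * t by apply: leq_mul.
    rewrite mulSn; lia.
  have [d ed] : exists d, q = z + d by exists (q - z); lia.
  rewrite ed in hm *.
  have ey : y = r + d * t by timeout 20 lia.
  rewrite ey.
  have : b * d <= t * a * d by apply: leq_mul => //; lia.
  timeout 20 lia.
Qed.

Theorem proposition3p9 (m a b t : nat) :
  3 <= m -> 1 <= a -> 2 <= t -> t <= m - 1 ->
  (t - 1) * (a * m + 1) < b * m + t -> b * m + t < t * (a * m + 1) ->
  is_frobenius (S3 m a b t)
    (((m - 1) %% t) * (a * m + 1) + ((m - 1) %/ t) * (b * m + t) - m).
Proof.
move=> m3 a1 t2 tm h1 h2.
set r := (m - 1) %% t; set q := (m - 1) %/ t.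
have hrq : m - 1 = q * t + r by apply: divn_eq.
have rt : r < t by rewrite ltn_pmod //; lia.
have hb1 : (t - 1) * a <= b.
  rewrite leqNgt; apply/negP => c.
  have : (b.+1) * m <= ((t - 1) * a) * m by apply: leq_mul.
  rewrite mulnDr muln1 mulnA in h1. lia.
have hb2 : b < t * a.
  rewrite ltnNge; apply/negP => c.
  have : (t * a) * m <= b * m by apply: leq_mul.
  rewrite mulnDr muln1 mulnA in h2. lia.
have q1 : 1 <= q.
  rewrite /q; apply: (@leq_trans (t %/ t)); first by rewrite divnn; lia.
  by apply: leq_div2r.
set P := a * r + b * q.
have P1 : 1 <= P by rewrite /P; nia.
have eF : r * (a * m + 1) + q * (b * m + t) - m = m * P - 1.
  rewrite /P; nia.
rewrite eF; split.
- move=> /S3_form [u [y [z e]]].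
  have e2 : m * P = m * (u + a * y + b * z) + (y + z * t) + 1.
    have : m * P - 1 + 1 = m * P by lia.
    rewrite e => <-. timeout 20 lia.
  have lt : u + a * y + b * z < P.
    by rewrite -(ltn_pmul2l (_ : 0 < m)); lia.
  have hs : y + z * t + 1 = m * (P - (u + a * y + b * z)) by rewrite mulnBr; lia.
  have hm : r + q * t + 1 = m by lia.
  have := @L1 m a b t r q y z _ hm rt hb1 hb2 m3 t2 hs (_ : 0 < _).
  rewrite -/P; lia.
- move=> x hx.
  have ex := divn_eq x m.
  have im : x %% m < m by rewrite ltn_pmod //; lia.
  set c := x %/ m in ex; set i := x %% m in ex im.
  have ei := divn_eq i t.
  set f := a * (i %% t) + b * (i %/ t).
  have hf : f <= P by apply: mono => //; lia.
  have hc : P <= c.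
    rewrite leqNgt; apply/negP => cP.
    have : c.+1 * m <= P * m by apply: leq_mul.
    rewrite mulSn; lia.
  have -> : x = (c - f) * m + ((i %% t) * (a * m + 1) + ((i %/ t) * (b * m + t) + 0)).
    have -> : (c - f) * m = c * m - f * m by rewrite mulnBl.
    have : f * m <= c * m by apply: leq_mul => //; lia.
    rewrite /f. timeout 20 lia.
  apply: S3_mul; first by left.
  apply: S3_mul; first by right; left.
  apply: S3_mul; first by right; right.
  exact: gen_monoid0.
Qed.
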